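(* Let $k\ge 2$, $\ell\ge1$, $m\ge1$ be integers with $m\cdot2^{-k\ell}<\frac12$, and let $\mathcal X=\{\Phi_i:0\le i<2^m\}$ be the set of hard CNF formulas described in the context. For all $0\le i,j<2^m$, $$d_{\mathrm{TV}}(\mu_i,\mu_j)\ge d_b(i,j)\cdot2^{-k\ell-2}.$$
   Context: Gadgets: on variables $U=\{v_{i,j}:i\in[\ell],j\in[k]\}$, for each $i\in\{1,\dots,\ell-1\}$, $j\in[k]$, let $c_{ij}$ be the clause on $\{v_{i,r}:r\ne j\}\cup\{v_{i+1,j}\}$ forbidding the all-True assignment if $i$ is odd and the all-False assignment if $i$ is even; let $\mathcal C$ be the set of these clauses and $c$ the clause on $\{v_{1,j}:j\in[k]\}$ forbidding all-True. The unrestricted depth-$\ell$ gadget is $(U,\mathcal C)$, the restricted one is $(U,\mathcal C\cup\{c\})$. Hard formulas: let $V$ have $mk\ell$ variables partitioned into $U_1,\dots,U_m$ each of size $k\ell$. For $0\le i<2^m$, write $i$ in binary with $m$ bits $i_1,\dots,i_m$; $\Phi_i=(V,\mathcal C_i)$ places on each $U_j$ the unrestricted depth-$\ell$ gadget if $i_j=0$ and the restricted depth-$\ell$ gadget if $i_j=1$. $\mu_i$ is the uniform distribution over satisfying assignments of $\Phi_i$, $d_{\mathrm{TV}}$ is total variation distance, and $d_b(i,j)$ is the number of positions where the $m$-bit binary representations of $i$ and $j$ differ. *)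

(* Defs.v *)
From mathcomp Require Import all_boot all_order all_algebra.
Set Implicit Arguments. Unset Strict Implicit. Unset Printing Implicit Defensive.
Import Order.TTheory GRing.Theory Num.Theory.
Local Open Scope ring_scope.

(* Generic CNF machinery.  All clauses used here are monotone: a clause on a
   variable set S "forbidding the all-b assignment" is satisfied by sigma iff
   not every variable of S takes value b. *)
Record clause (V : finType) := Clause { cvars : {set V}; cforbid : bool }.

Definition sat_clause (V : finType) (sigma : {ffun V -> bool}) (c : clause V) : bool :=
  ~~ [forall v in cvars c, sigma v == cforbid c].

Definition sat_cnf (V : finType) (F : seq (clause V)) (sigma : {ffun V -> bool}) : bool :=
  all (sat_clause sigma) F.

Definition sat_set (V : finType) (F : seq (clause V)) : {set {ffun V -> bool}} :=
  [set sigma | sat_cnf F sigma].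

Definition unif_sat (R : numFieldType) (V : finType) (F : seq (clause V))
  (sigma : {ffun V -> bool}) : R :=
  if sigma \in sat_set F then (#|sat_set F|%:R)^-1 else 0.

Definition dTV (R : numFieldType) (T : finType) (mu nu : T -> R) : R :=
  2^-1 * \sum_(x : T) `|mu x - nu x|.

(* Variables: v_{b; i, j} = variable (level i, column j) of block U_b,
   0-based: b < m, i < l, j < k. *)
Definition Var (m l k : nat) : finType := ('I_m * ('I_l * 'I_k))%type.

(* clause c_{ij} of the depth-l gadget on block b (0-based level i, i.+1 < l):
   variables {v_{i,r} : r <> j} u {v_{i+1,j}}; forbids all-True when the
   1-based level i+1 is odd (i.e. i even), all-False otherwise. *)
Definition chain_clause (m l k : nat) (b : 'I_m) (i : 'I_l) (j : 'I_k) : clause (Var m l k) :=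
  Clause [set v : Var m l k | (v.1 == b) &&
           (((v.2.1 == i :> nat) && (v.2.2 != j)) ||
            ((v.2.1 == i.+1 :> nat) && (v.2.2 == j)))]
         (~~ odd i).

Definition restr_clause (m l k : nat) (b : 'I_m) : clause (Var m l k) :=
  Clause [set v : Var m l k | (v.1 == b) && (v.2.1 == 0 :> nat)] true.

Definition gadget_clauses (m l k : nat) (b : 'I_m) : seq (clause (Var m l k)) :=
  [seq @chain_clause m l k b i j | i <- [seq i : 'I_l <- enum 'I_l | (i.+1 < l)%N], j <- enum 'I_k].

(* m-bit binary representation i_1 ... i_m (i_1 most significant);
   0-based position b corresponds to i_{b+1}. *)
Definition bitm (m : nat) (i : nat) (b : 'I_m) : bool := odd (i %/ 2 ^ (m - b.+1))%N.

Definition Phi (m l k : nat) (i : nat) : seq (clause (Var m l k)) :=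
  flatten [seq @gadget_clauses m l k b ++ (if @bitm m i b then [:: @restr_clause m l k b] else [::])
          | b <- enum 'I_m].

Definition mu (R : numFieldType) (m l k : nat) (i : nat) : {ffun Var m l k -> bool} -> R :=
  unif_sat R (Phi m l k i).

Definition db (m : nat) (i j : nat) : nat := #|[set b : 'I_m | @bitm m i b != @bitm m j b]|.

(* Main.v *)
Require Import Defs.
From mathcomp Require Import all_boot all_order all_algebra.
From mathcomp Require Import zify.
Set Implicit Arguments. Unset Strict Implicit. Unset Printing Implicit Defensive.
Import Order.TTheory GRing.Theory Num.Theory.

Lemma arith_step (N n y w z : nat) : ( n * (y + w) <= 2 * N * y -> w <= z * N -> n.+1 <= N ->
  (N - 1) * (n * (y + w)) <= (N - 1) * (2 * N * y) ->
  N * (n.+1 * (y + w)) <= N * (2 * N * (y + z)))%N.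
Proof.
move=> H1 H2 H3 H4.
have H5 : n * (y + w) <= N * (y + w) by rewrite leq_mul2r ltnW ?orbT.
have H6 : 2 * N * w <= 2 * N * (z * N) by rewrite leq_mul2l H2 orbT.
set A := n * (y + w) in H1 H4 H5 *.
rewrite mulSn in H5 *.
have -> : N * (y + w + A) = N * y + N * w + N * A by rewrite !mulnDr.
have HN : 1 <= N by apply: leq_trans H3.
move: H4; rewrite mulnBl mul1n mulnBl mul1n => H4.
have : N * A <= 2 * N * N * y - 2 * N * y + A.
   rewrite -[N * (2 * N * y)]/(N * (2 * N * y)) in H4. lia.
have H7 : N * y <= N * (N * y) by rewrite leq_pmull // (leq_trans _ H3).
move=> H8; rewrite !mulnA in H7 H8 H6 *. lia.
Qed.

Section Blocks.
Variables (m l k : nat).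
Local Notation V := (Var m l k).
Implicit Types (sigma tau : {ffun V -> bool}) (b : 'I_m).

Definition blk_ok (i : nat) b sigma :=
  all (sat_clause sigma) (gadget_clauses l k b) &&
  (bitm i b ==> sat_clause sigma (restr_clause l k b)).

Lemma all_flatten (T : Type) (a : pred T) (ss : seq (seq T)) :
  all a (flatten ss) = all (all a) ss.
Proof. by elim: ss => //= s ss IH; rewrite all_cat IH. Qed.

Lemma sat_PhiP i sigma : reflect (forall b, blk_ok i b sigma) (sat_cnf (Phi m l k i) sigma).
Proof.
rewrite /sat_cnf /Phi all_flatten all_map.
apply: (iffP allP) => [H b|H b _] /=.
  have := H b; rewrite mem_enum => /(_ isT) /=; rewrite all_cat /blk_ok => /andP [-> H2].
  by case: (bitm i b) H2 => //= /andP [].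
have := H b; rewrite /blk_ok all_cat => /andP [-> H2] /=.
by case: (bitm i b) H2 => //= ->.
Qed.

Definition agree_on b sigma tau := forall v : V, v.1 = b -> sigma v = tau v.

Lemma sat_clause_local b sigma tau (c : clause V) :
  (forall v, v \in cvars c -> v.1 = b) -> agree_on b sigma tau ->
  sat_clause sigma c = sat_clause tau c.
Proof.
move=> Hc Ha; rewrite /sat_clause; congr negb; apply: eq_forallb => v.
by case Hv: (v \in cvars c) => //=; rewrite Ha // Hc.
Qed.

Lemma chain_vars b (i : 'I_l) (j : 'I_k) v : v \in cvars (@chain_clause m l k b i j) -> v.1 = b.
Proof. by rewrite inE => /andP [/eqP]. Qed.

Lemma restr_vars b v : v \in cvars (restr_clause l k b) -> v.1 = b.
Proof. by rewrite inE => /andP [/eqP]. Qed.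

Lemma gadgetP b sigma :
  reflect (forall (i : 'I_l) (j : 'I_k), (i.+1 < l)%N -> sat_clause sigma (@chain_clause m l k b i j))
    (all (sat_clause sigma) (gadget_clauses l k b)).
Proof.
apply: (iffP all_allpairsP) => H i j.
  move=> Hi; apply: H; last by rewrite mem_enum.
  by rewrite mem_filter Hi mem_enum.
by rewrite mem_filter => /andP [Hi _] _; exact: H.
Qed.

Lemma blk_ok_local i b sigma tau : agree_on b sigma tau -> blk_ok i b sigma = blk_ok i b tau.
Proof.
move=> Ha; rewrite /blk_ok (sat_clause_local (@restr_vars b) Ha); congr andb.
apply/gadgetP/gadgetP => H x y Hx.
  by rewrite -(sat_clause_local (@chain_vars b x y) Ha); apply: H.
by rewrite (sat_clause_local (@chain_vars b x y) Ha); apply: H.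
Qed.

Definition sigma0 : {ffun V -> bool} := [ffun v : V => odd v.2.1].

Lemma sigma0_ok i b : (1 < k)%N -> (0 < l)%N -> blk_ok i b sigma0.
Proof.
move=> Hk Hl; apply/andP; split.
  apply/gadgetP => x y _.
  pose r : 'I_k := if val y == 0%N then Ordinal Hk else Ordinal (ltn_trans (ltnSn 0) Hk).
  have Hr : r != y.
    apply/negP => /eqP /(f_equal val); rewrite /r; case: (val y =P 0%N) => [->|Hy] //= H; exact: Hy (esym H).
  apply/negP => /forallP /(_ (b, (x, r))); rewrite !inE /= !eqxx Hr /= ffunE /=.
  by case: (odd x).
apply/implyP => _; apply/negP => /forallP /(_ (b, (Ordinal Hl, Ordinal (ltn_trans (ltnSn 0) Hk)))).
by rewrite !inE /= !eqxx /= ffunE.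
Qed.

Definition alt b sigma : {ffun V -> bool} :=
  [ffun v : V => if v.1 == b then ~~ odd v.2.1 else sigma v].

Lemma alt_agree b b' sigma : b' != b -> agree_on b' sigma (alt b sigma).
Proof. by move=> Hb v Hv; rewrite ffunE Hv (negbTE Hb). Qed.

Lemma alt_restr b sigma : ~~ sat_clause (alt b sigma) (restr_clause l k b).
Proof.
rewrite /sat_clause negbK; apply/forallP => v; apply/implyP; rewrite inE => /andP [/eqP H1 /eqP H2].
by rewrite ffunE /= H1 eqxx H2.
Qed.

Lemma alt_ok i b sigma : bitm i b = false -> blk_ok i b (alt b sigma).
Proof.
move=> Hb; rewrite /blk_ok Hb andbT; apply/gadgetP => x y Hx.
apply/negP => /forallP /(_ (b, (Ordinal Hx, y))); rewrite !inE /= !eqxx /= orbT /= ffunE /= eqxx.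
by case: (odd x).
Qed.

Definition Eb b sigma := ~~ sat_clause sigma (restr_clause l k b).
Definition ET (T : {set 'I_m}) sigma := [exists b in T, Eb b sigma].

Lemma Eb_local b sigma tau : agree_on b sigma tau -> Eb b sigma = Eb b tau.
Proof. by move=> H; rewrite /Eb (sat_clause_local (@restr_vars b) H). Qed.

Lemma ET_alt b (T : {set 'I_m}) sigma : b \notin T -> ET T (alt b sigma) = ET T sigma.
Proof.
move=> HbT; apply: eq_existsb => b'; case Hb': (b' \in T) => //=.
rewrite (Eb_local (alt_agree sigma (_ : b' != b))) //.
by apply: contraNneq HbT => <-.
Qed.

Lemma ET_U1 b (T : {set 'I_m}) sigma : ET (b |: T) sigma = Eb b sigma || ET T sigma.
Proof.
apply/existsP/orP => [[b' /andP [] ]|[H|/existsP [b' /andP [H1 H2]]]].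
  by rewrite !inE => /orP [/eqP -> ->|H1 H2]; [left | right; apply/existsP; exists b'; rewrite H1].
  by exists b; rewrite !inE eqxx.
by exists b'; rewrite !inE H1 orbT.
Qed.

Lemma alt_in_S i b sigma : bitm i b = false -> sigma \in sat_set (Phi m l k i) ->
  alt b sigma \in sat_set (Phi m l k i).
Proof.
rewrite !inE => Hb /sat_PhiP H; apply/sat_PhiP => b'.
case: (eqVneq b' b) => [->|Hne]; first exact: alt_ok.
by rewrite -(blk_ok_local _ (alt_agree sigma Hne)).
Qed.

Lemma inj_count i b (T : {set 'I_m}) : bitm i b = false -> b \notin T ->
  (#|[set sigma in sat_set (Phi m l k i) | ~~ ET T sigma]| <=
   #|[set sigma in sat_set (Phi m l k i) | Eb b sigma && ~~ ET T sigma]| * 2 ^ (k * l))%N.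
Proof.
move=> Hb HbT.
pose f (sigma : {ffun V -> bool}) : {ffun V -> bool} * {ffun 'I_l * 'I_k -> bool} :=
  (alt b sigma, [ffun p : 'I_l * 'I_k => (sigma (b, p) : bool)]).
have finj : injective f.
  move=> s1 s2 [H1 H2]; apply/ffunP => v.
  case: (eqVneq v.1 b) => Hv.
    have := congr1 (fun g : {ffun 'I_l * 'I_k -> bool} => g v.2) H2; rewrite !ffunE; case: v Hv => [v1 v2] /= -> //.
  have := congr1 (fun g : {ffun V -> bool} => g v) H1; rewrite !ffunE (negbTE Hv) //.
rewrite -(card_imset _ finj).
have -> : (2 ^ (k * l) = #|[set: {ffun 'I_l * 'I_k -> bool}]|)%N.
  by rewrite cardsT card_ffun card_prod !card_ord card_bool mulnC.
rewrite -cardsX; apply: subset_leq_card; apply/subsetP => x /imsetP [sigma].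
rewrite !inE => /andP [HS HE] ->; rewrite /f /= andbT.
rewrite ET_alt // HE andbT /Eb alt_restr andbT.
by move: (@alt_in_S i b sigma Hb); rewrite !inE; apply.
Qed.

Lemma card_split (T : finType) (A : {set T}) (P : pred T) :
  (#|[set x in A | P x]| + #|[set x in A | ~~ P x]| = #|A|)%N.
Proof.
rewrite -(cardsID [set x | P x] A); congr addn; apply: eq_card => x; by rewrite !inE // andbC.
Qed.

Lemma key i n : forall T : {set 'I_m}, #|T| = n -> {in T, forall b, bitm i b = false} ->
  (n <= 2 ^ (k * l))%N ->
  (n * #|sat_set (Phi m l k i)| <= 2 * 2 ^ (k * l) * #|[set sigma in sat_set (Phi m l k i) | ET T sigma]|)%N.
Proof.
set S := sat_set (Phi m l k i); set N := (2 ^ (k * l))%N.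
elim: n => [|n IH] T HT Hb Hn; first by rewrite mul0n.
have /set0Pn [b HbT] : T != set0 by rewrite -card_gt0 HT.
set T' := T :\ b.
have HT' : #|T'| = n by move: HT; rewrite (cardsD1 b) HbT add1n => -[].
have HbT' : b \notin T' by rewrite !inE eqxx.
have Hb' : {in T', forall b, bitm i b = false} by move=> x; rewrite inE => /andP [_ /Hb].
have IH' := IH T' HT' Hb' (ltnW Hn).
have Hinj := inj_count (Hb b HbT) HbT'.
have Hs := card_split S (ET T').
have HU : forall x, ET T x = Eb b x || ET T' x by move=> x; rewrite -ET_U1 setD1K.
have Hy : #|[set sigma in S | ET T sigma]| =
    (#|[set sigma in S | ET T' sigma]| + #|[set sigma in S | Eb b sigma && ~~ ET T' sigma]|)%N.
  rewrite -(card_split [set sigma in S | ET T sigma] (ET T')); congr addn; apply: eq_card => x;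
  rewrite !inE HU; case: (sat_cnf (Phi m l k i) x); case: (Eb b x); case: (ET T' x); done.
rewrite Hy; rewrite -Hs.
move: IH' Hinj Hn; rewrite -Hs.
set y := #|[set sigma in S | ET T' sigma]|.
set w := #|[set sigma in S | ~~ ET T' sigma]|.
set z := #|[set sigma in S | Eb b sigma && ~~ ET T' sigma]|.
move=> H1 H2 H3.
have HN : (0 < N)%N by rewrite expn_gt0.
rewrite -(leq_pmul2l HN).
have H4 : ((N - 1) * (n * (y + w)) <= (N - 1) * (2 * N * y))%N by rewrite leq_mul2l H1 orbT.
exact: arith_step H1 H2 H3 H4.
Qed.

End Blocks.

Section Real.
Variable R : realFieldType.
Local Open Scope ring_scope.

Lemma tv_lb (T : finType) (p q : T -> R) (E : pred T) :
  \sum_x p x = \sum_x q x -> (forall x, E x -> p x = 0) ->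
  \sum_(x | E x) q x <= dTV p q.
Proof.
move=> Hs HE; rewrite /dTV.
have H1 : \sum_x (if E x then q x - p x else p x - q x) <= \sum_x `|p x - q x|.
  apply: ler_sum => x _; case: (E x); last exact: ler_norm.
  by rewrite distrC; exact: ler_norm.
have H2 : \sum_x (if E x then q x - p x else p x - q x) = 2 * \sum_(x | E x) q x.
  rewrite (bigID E) /=.
  have -> : \sum_(x | true && E x) (if E x then q x - p x else p x - q x) = \sum_(x | E x) q x.
    by apply: eq_big => // x /= Hx; rewrite Hx HE // subr0.
  have -> : \sum_(x | true && ~~ E x) (if E x then q x - p x else p x - q x)
      = \sum_(x | ~~ E x) (p x - q x).
    by apply: eq_big => // x /= Hx; rewrite (negbTE Hx).
  have Hz : \sum_x (p x - q x) = 0 by rewrite sumrB Hs subrr.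
  move: Hz; rewrite (bigID E) /=.
  have -> : \sum_(x | true && E x) (p x - q x) = - \sum_(x | E x) q x.
    by rewrite -sumrN; apply: eq_big => // x /= Hx; rewrite HE // sub0r.
  move=> Hz; have -> : \sum_(x | ~~ E x) (p x - q x) = \sum_(x | E x) q x.
    by move/eqP: Hz; rewrite addrC subr_eq0 => /eqP.
  by rewrite mulr2n mulrDl mul1r.
rewrite mulrC ler_pdivlMr; last by [].
by rewrite mulrC -H2.
Qed.

Lemma unif_sum_E (V : finType) (F : seq (clause V)) (E : pred {ffun V -> bool}) :
  \sum_(x | E x) unif_sat R F x = #|[set x in sat_set F | E x]|%:R / #|sat_set F|%:R.
Proof.
rewrite /unif_sat -big_mkcondr.
rewrite (eq_bigl (fun x => x \in [set x in sat_set F | E x])); last by move=> x; rewrite !inE andbC.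
by rewrite sumr_const [RHS]mulrC mulr_natr.
Qed.

Lemma unif_sum1 (V : finType) (F : seq (clause V)) : (0 < #|sat_set F|)%N ->
  \sum_x unif_sat R F x = 1.
Proof.
move=> H; rewrite (unif_sum_E F predT).
have -> : [set x in sat_set F | predT x] = sat_set F by apply/setP => x; rewrite !inE andbT.
by rewrite divff // pnatr_eq0 -lt0n.
Qed.

Lemma main (m l k i j : nat) : (1 < k)%N -> (0 < l)%N -> (2 * m < 2 ^ (k * l))%N ->
  (#|[set b : 'I_m | bitm j b && ~~ bitm i b]| <= #|[set b : 'I_m | bitm i b && ~~ bitm j b]|)%N ->
  (db m i j)%:R / 2%:R ^+ (k * l + 2) <= dTV (@mu R m l k i) (@mu R m l k j).
Proof.
move=> Hk Hl Hm Hc.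
set D1 := [set b : 'I_m | bitm i b && ~~ bitm j b].
set D2 := [set b : 'I_m | bitm j b && ~~ bitm i b].
have Hd : db m i j = (#|D1| + #|D2|)%N.
  rewrite /db -(card_split [set b : 'I_m | bitm i b != bitm j b] (fun b => bitm i b)).
  congr addn; apply: eq_card => b; rewrite !inE;
  by case: (bitm i b); case: (bitm j b).
have Hne : forall ii, (0 < #|sat_set (Phi m l k ii)|)%N.
  move=> ii; apply/card_gt0P; exists (sigma0 m l k); rewrite inE.
  by apply/sat_PhiP => b; apply: sigma0_ok.
have Hz : forall x, ET D1 x -> @mu R m l k i x = 0.
  move=> x; rewrite /ET => /existsP [b /andP [Hb HE]]; rewrite /mu /unif_sat; case: ifP => // HS.
  move: HS; rewrite inE => /sat_PhiP /(_ b) /andP [_].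
  by move: Hb HE; rewrite inE /Eb => /andP [-> _] /negbTE -> .
have Htv := @tv_lb _ (@mu R m l k i) (@mu R m l k j) (ET D1) _ Hz.
have {Htv} Htv := Htv (etrans (unif_sum1 (Hne i)) (esym (unif_sum1 (Hne j)))).
rewrite /mu unif_sum_E in Htv.
apply: le_trans Htv.
set N := (2 ^ (k * l))%N.
have HD1 : (#|D1| <= N)%N.
  apply: leq_trans (max_card _) _; rewrite card_ord; lia.
have Hkey := @key m l k j #|D1| D1 (erefl _).
have {Hkey} Hkey : (#|D1| * #|sat_set (Phi m l k j)| <= 2 * N * #|[set sigma in sat_set (Phi m l k j) | ET D1 sigma]|)%N.
  apply: Hkey => // b; rewrite inE => /andP [_ /negbTE].
  done.
set s := #|sat_set (Phi m l k j)| in Hkey *.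
set y := #|[set sigma in sat_set (Phi m l k j) | ET D1 sigma]| in Hkey *.
have Hs : (0 < s)%N by apply: Hne.
rewrite -natrX ler_pdivrMr ?ltr0n ?expn_gt0 // mulrAC ler_pdivlMr ?ltr0n //.
rewrite -!natrM ler_nat Hd expnD.
rewrite -/N.
have H1 : ((#|D1| + #|D2|) * s <= (2 * #|D1|) * s)%N by rewrite leq_mul2r; apply/orP; right; rewrite mul2n -addnn leq_add2l.
apply: (leq_trans H1).
have -> : (y * (N * 2 ^ 2) = 2 * (2 * N * y))%N by lia.
by rewrite -mulnA leq_mul2l Hkey orbT.
Qed.
End Real.
Local Open Scope ring_scope.

Theorem lemma5p7 (R : realFieldType) (k l m : nat) :
  (2 <= k)%N -> (1 <= l)%N -> (1 <= m)%N ->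
  (m%:R / 2%:R ^+ (k * l) < 2%:R^-1 :> R) ->
  forall i j : 'I_(2 ^ m),
    (db m i j)%:R / 2%:R ^+ (k * l + 2) <= dTV (@mu R m l k i) (@mu R m l k j).
Proof.
move=> Hk Hl _ Hlt i j.
have H2m : (2 * m < 2 ^ (k * l))%N.
  move: Hlt; rewrite -natrX ltr_pdivrMr ?ltr0n ?expn_gt0 // mulrC ltr_pdivlMr ?ltr0n //.
  by rewrite -natrM ltr_nat mulnC.
case: (leqP #|[set b : 'I_m | bitm j b && ~~ bitm i b]| #|[set b : 'I_m | bitm i b && ~~ bitm j b]|) => H.
  exact: main.
have := @main R m l k j i Hk Hl H2m (ltnW H).
have -> : db m j i = db m i j by rewrite /db; apply: eq_card => b; rewrite !inE eq_sym.
have -> : dTV (@mu R m l k j) (@mu R m l k i) = dTV (@mu R m l k i) (@mu R m l k j).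
  by rewrite /dTV; congr (_ * _); apply: eq_bigr => x _; rewrite distrC.
by [].
Qed.
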